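(* Let $r>0$, $R_0>r$, $V_T>0$ and $\Delta V>0$. Put $\alpha=R_0/r$, $V_s=\frac{2\pi R_0V_T}{r}+V_T+\Delta V$, $R_{last}=\frac{rV_T(2\pi+1)}{V_s}$, $t_1=\frac{R_{last}}{V_s-V_T}$ and $t_2=\frac{2V_sR_{last}}{(V_s-V_T)^2}$. Suppose that at time $0$ every undetected evader lies in the closed disk of radius $R_{last}$ centered at the origin, and that each evader moves along a continuous path with speed at most $V_T$. The sensor at time $\tau$ is the segment $\{(x_s(\tau),y):|y|\le r\}$, where $x_s(\tau)=V_s\tau$ for $0\le\tau\le t_1$ and $x_s(\tau)=V_st_1-V_s(\tau-t_1)$ for $t_1\le\tau\le t_1+t_2$. An evader is detected if at some time its position lies on the sensor. If $$\Delta V\ge -2\pi\alpha V_T+\pi V_T+V_T+V_T\sqrt{\pi^2+6\pi+7},$$ then every evader is detected by time $t_1+t_2$, i.e. the evader region is completely cleaned by this final linear scan.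
   Context: This is the end game of the sweep process: evaders start in a disk of radius $R_0$, the sweeper line sensor has length $2r$, and the sweeper speed is $V_s=V_c+\Delta V$ with $V_c=2\pi R_0V_T/r+V_T$. After the circular sweeps and a last inward motion, the evader region is contained in a disk of radius $R_{last}$. The sensor then sweeps to the right until it catches the rightward expanding front of the evader region, and then to the left until it catches the leftward expanding front. *)

(* Defs.v *)
From Stdlib Require Import Reals.
Open Scope R_scope.

Definition Vs (r R0 VT dV : R) : R := 2 * PI * R0 * VT / r + VT + dV.

Definition Rlast (r R0 VT dV : R) : R := r * VT * (2 * PI + 1) / Vs r R0 VT dV.

Definition t1 (r R0 VT dV : R) : R := Rlast r R0 VT dV / (Vs r R0 VT dV - VT).

Definition t2 (r R0 VT dV : R) : R :=
  2 * Vs r R0 VT dV * Rlast r R0 VT dV / (Vs r R0 VT dV - VT) ^ 2.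

Definition xs (r R0 VT dV : R) (tau : R) : R :=
  if Rle_dec tau (t1 r R0 VT dV)
  then Vs r R0 VT dV * tau
  else Vs r R0 VT dV * t1 r R0 VT dV - Vs r R0 VT dV * (tau - t1 r R0 VT dV).

Definition dist2 (x1 y1 x2 y2 : R) : R := sqrt ((x1 - x2) ^ 2 + (y1 - y2) ^ 2).

(* Main.v *)
Require Import Defs.
From Stdlib Require Import Reals Lra Psatz Ranalysis5.
Open Scope R_scope.

Lemma abs_le_dist2 (a b c d : R) : Rabs (a - c) <= dist2 a b c d.
Proof.
  unfold dist2. rewrite <- sqrt_Rsqr_abs. apply sqrt_le_1_alt.
  unfold Rsqr. simpl. pose proof (Rle_0_sqr (b - d)). pose proof (Rle_0_sqr (a - c)). unfold Rsqr in *. lra.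
Qed.

Lemma abs_le_dist2y (a b c d : R) : Rabs (b - d) <= dist2 a b c d.
Proof.
  unfold dist2. rewrite <- sqrt_Rsqr_abs. apply sqrt_le_1_alt.
  unfold Rsqr. simpl. pose proof (Rle_0_sqr (b - d)). pose proof (Rle_0_sqr (a - c)). unfold Rsqr in *. lra.
Qed.

Theorem theorem7 (r R0 VT dV : R)
  (hr : 0 < r) (hR0 : r < R0) (hVT : 0 < VT) (hdV : 0 < dV)
  (hcond : dV >= - 2 * PI * (R0 / r) * VT + PI * VT + VT
                 + VT * sqrt (PI ^ 2 + 6 * PI + 7))
  (px py : R -> R)
  (hcont : forall t, 0 <= t <= t1 r R0 VT dV + t2 r R0 VT dV ->
             continuity_pt px t /\ continuity_pt py t)
  (hspeed : forall s t,
             0 <= s <= t1 r R0 VT dV + t2 r R0 VT dV ->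
             0 <= t <= t1 r R0 VT dV + t2 r R0 VT dV ->
             dist2 (px t) (py t) (px s) (py s) <= VT * Rabs (t - s))
  (hinit : dist2 (px 0) (py 0) 0 0 <= Rlast r R0 VT dV) :
  exists tau, 0 <= tau <= t1 r R0 VT dV + t2 r R0 VT dV /\
    px tau = xs r R0 VT dV tau /\ Rabs (py tau) <= r.
Proof.
  assert (hpi := PI_RGT_0).
  set (s := sqrt (PI ^ 2 + 6 * PI + 7)) in *.
  assert (hs0 : 0 <= s) by apply sqrt_pos.
  assert (hs2 : s * s = PI ^ 2 + 6 * PI + 7).
  { unfold s. apply sqrt_sqrt. nra. }
  set (V := Vs r R0 VT dV).
  assert (hV : V = 2 * PI * (R0 / r) * VT + VT + dV).
  { unfold V, Vs. field. lra. }
  assert (hVge : V >= VT * (PI + 2 + s)) by lra.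
  assert (hR0r : 0 < R0 / r) by (apply Rdiv_lt_0_compat; lra).
  assert (hVa : V - VT > 0) by nra.
  assert (hVp : V > 0) by lra.
  set (RL := Rlast r R0 VT dV).
  assert (hR : RL = r * VT * (2 * PI + 1) / V) by reflexivity.
  assert (hRpos : 0 < RL).
  { rewrite hR. apply Rdiv_lt_0_compat; [|lra]. apply Rmult_lt_0_compat; [apply Rmult_lt_0_compat|]; lra. }
  set (T1 := t1 r R0 VT dV).
  assert (hT1 : T1 = RL / (V - VT)) by reflexivity.
  set (T2 := t2 r R0 VT dV).
  assert (hT2 : T2 = 2 * V * RL / (V - VT) ^ 2) by reflexivity.
  assert (hT1pos : 0 < T1) by (rewrite hT1; apply Rdiv_lt_0_compat; lra).
  assert (hT2pos : 0 < T2).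
  { rewrite hT2; apply Rdiv_lt_0_compat; [nra|]. apply pow_lt. lra. }
  assert (e1 : V * T1 = RL + VT * T1) by (rewrite hT1; field; lra).
  assert (e2 : (V - VT) * T2 = 2 * V * T1) by (rewrite hT2, hT1; field; lra).
  assert (key : RL + VT * (T1 + T2) <= r).
  { assert (eq : RL + VT * (T1 + T2) = r * VT * (2*PI+1) * (V + VT) / (V - VT)^2).
    { rewrite hT2, hT1, hR. field. lra. }
    rewrite eq.
    assert (hd : 0 < (V - VT)^2) by (apply pow_lt; lra).
    apply (Rmult_le_reg_r ((V - VT)^2)); [exact hd|].
    replace (r * VT * (2 * PI + 1) * (V + VT) / (V - VT) ^ 2 * (V - VT) ^ 2)
      with (r * (VT * (2 * PI + 1) * (V + VT))) by (field; lra).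
    apply Rmult_le_compat_l; [lra|].
    set (W := V - VT).
    assert (hW : W >= VT * (PI + 1 + s)) by (unfold W; lra).
    assert (h1 : (W - VT * (PI + 1 + s)) * (W + VT * (PI + 1 + s) - (2*PI+1) * VT) >= 0).
    { apply Rle_ge, Rmult_le_pos; nra. }
    replace V with (W + VT) by (unfold W; ring).
    nra. }
  assert (bx : forall t, 0 <= t <= T1 + T2 -> Rabs (px t) <= RL + VT * t).
  { intros t ht.
    pose proof (abs_le_dist2 (px t) (py t) (px 0) (py 0)) as a1.
    assert (h0 : 0 <= 0 <= T1 + T2) by lra.
    pose proof (hspeed 0 t h0 ht) as a2.
    rewrite Rminus_0_r, Rabs_right in a2 by lra.
    pose proof (abs_le_dist2 (px 0) (py 0) 0 0) as a3.
    rewrite Rminus_0_r in a3.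
    fold RL in hinit.
    pose proof (Rabs_triang (px t - px 0) (px 0)) as a4.
    replace (px t - px 0 + px 0) with (px t) in a4 by ring. lra. }
  assert (by_ : forall t, 0 <= t <= T1 + T2 -> Rabs (py t) <= r).
  { intros t ht.
    pose proof (abs_le_dist2y (px t) (py t) (px 0) (py 0)) as a1.
    assert (h0 : 0 <= 0 <= T1 + T2) by lra.
    pose proof (hspeed 0 t h0 ht) as a2.
    rewrite Rminus_0_r, Rabs_right in a2 by lra.
    pose proof (abs_le_dist2y (px 0) (py 0) 0 0) as a3.
    rewrite Rminus_0_r in a3.
    fold RL in hinit.
    pose proof (Rabs_triang (py t - py 0) (py 0)) as a4.
    replace (py t - py 0 + py 0) with (py t) in a4 by ring. nra. }
  set (g := fun t => px t - (V * T1 - V * (t - T1))).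
  assert (gxs : forall t, T1 <= t -> px t = xs r R0 VT dV t <-> g t = 0).
  { intros t ht. unfold g, xs. fold T1 V.
    destruct (Rle_dec t T1).
    - assert (t = T1) by lra. subst t. split; intro; lra.
    - split; intro; lra. }
  assert (g1 : g T1 <= 0).
  { unfold g. pose proof (bx T1 ltac:(lra)). pose proof (Rle_abs (px T1)). pose proof (Rle_abs (- px T1)). rewrite Rabs_Ropp in *. lra. }
  assert (g2 : 0 <= g (T1 + T2)).
  { unfold g. pose proof (bx (T1+T2) ltac:(lra)). pose proof (Rle_abs (px (T1+T2))). pose proof (Rle_abs (- px (T1+T2))). rewrite Rabs_Ropp in *. nra. }
  destruct (Req_dec (g T1) 0) as [z1|n1].
  { exists T1. split; [lra|]. split; [apply gxs; lra|]. apply by_; lra. }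
  destruct (Req_dec (g (T1 + T2)) 0) as [z2|n2].
  { exists (T1 + T2). split; [lra|]. split; [apply gxs; lra|]. apply by_; lra. }
  destruct (IVT_interv g T1 (T1 + T2)) as [z [hz gz]].
  - intros a ha. unfold g. apply continuity_pt_minus.
    + assert (ha' : 0 <= a <= T1 + T2) by lra. exact (proj1 (hcont a ha')).
    + apply continuity_pt_minus; [apply continuity_pt_const; intros ? ?; reflexivity|].
      apply continuity_pt_mult; [apply continuity_pt_const; intros ? ?; reflexivity|].
      apply continuity_pt_minus; [apply derivable_continuous_pt, derivable_pt_id|].
      apply continuity_pt_const; intros ? ?; reflexivity.
  - lra.
  - lra.
  - lra.
  - exists z. split; [lra|]. split; [apply gxs; lra|]. apply by_; lra.
Qed.
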